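(* Let $A\in\mathbb R^{m\times n}$, and let $\omega:\mathbb R^m\to\mathbb R$ be convex (finite everywhere) and globally $K_\omega$-Lipschitz continuous. Fix $y\in\mathbb R^n$ and $\lambda>0$ and define $$\Phi_\lambda(u)=\omega(Au)+\frac1{2\lambda}\|u-y\|^2\ (u\in\mathbb R^n),\qquad \Psi_\lambda(v)=\frac1{2\lambda}\|\lambda A^\top v-y\|^2+\omega^\star(v)-\frac1{2\lambda}\|y\|^2\ (v\in\mathbb R^m).$$ Let $\bar v$ be a minimizer of $\Psi_\lambda$, let $(v_j)_{j\ge0}\subseteq\mathbb R^m$ satisfy $\lim_{j\to\infty}\Psi_\lambda(v_j)=\Psi_\lambda(\bar v)$, and set $z_j=y-\lambda A^\top v_j$ and $\bar z=y-\lambda A^\top\bar v$. Then: (i) $\bar z$ is a minimizer of $\Phi_\lambda$; (ii) $\Psi_\lambda(v_j)-\Psi_\lambda(\bar v)\ge\frac1{2\lambda}\|z_j-\bar z\|^2$ for all $j$, and consequently $z_j\to\bar z$; (iii) for all $j$, $$\Phi_\lambda(z_j)-\Phi_\lambda(\bar z)\le\sqrt{\Psi_\lambda(v_j)-\Psi_\lambda(\bar v)}\Big(2\sqrt{2\lambda}\,K_\omega\|A\|+\sqrt{\Psi_\lambda(v_j)-\Psi_\lambda(\bar v)}\Big).$$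
   Context: $\omega^\star(v)=\sup_{z\in\mathbb R^m}\{\langle z,v\rangle-\omega(z)\}$ is the Fenchel conjugate; $\|A\|$ is the operator (spectral) norm. *)

(* Defs.v *)
From HB Require Import structures.
From mathcomp Require Import all_boot all_order all_algebra.
From mathcomp Require Import all_classical all_reals all_analysis.
Set Implicit Arguments. Unset Strict Implicit. Unset Printing Implicit Defensive.
Import Order.TTheory GRing.Theory Num.Theory.
Local Open Scope ring_scope.
Local Open Scope classical_set_scope.

Section Defs.
Variable R : realType.

Definition dotv (k : nat) (u v : 'cV[R]_k) : R := \sum_(i < k) u i 0 * v i 0.

Definition enorm (k : nat) (u : 'cV[R]_k) : R := Num.sqrt (dotv u u).

Definition opnorm (m n : nat) (A : 'M[R]_(m, n)) : R :=
  sup [set enorm (A *m x) | x in [set x : 'cV[R]_n | enorm x <= 1]].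

Definition convex_fun (k : nat) (f : 'cV[R]_k -> R) : Prop :=
  forall (x y : 'cV[R]_k) (t : R), 0 <= t -> t <= 1 ->
    f (t *: x + (1 - t) *: y) <= t * f x + (1 - t) * f y.

Definition lipschitz_with (k : nat) (K : R) (f : 'cV[R]_k -> R) : Prop :=
  forall x y : 'cV[R]_k, `|f x - f y| <= K * enorm (x - y).

Definition fconj (k : nat) (f : 'cV[R]_k -> R) (v : 'cV[R]_k) : \bar R :=
  ereal_sup [set (dotv z v - f z)%:E | z in [set: 'cV[R]_k]].

Definition Phi (m n : nat) (A : 'M[R]_(m, n)) (omega : 'cV[R]_m -> R)
  (y : 'cV[R]_n) (lam : R) (u : 'cV[R]_n) : R :=
  omega (A *m u) + (2 * lam)^-1 * enorm (u - y) ^+ 2.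

Definition Psi (m n : nat) (A : 'M[R]_(m, n)) (omega : 'cV[R]_m -> R)
  (y : 'cV[R]_n) (lam : R) (v : 'cV[R]_m) : \bar R :=
  (((2 * lam)^-1 * enorm (lam *: (A^T *m v) - y) ^+ 2)%:E + fconj omega v
   - ((2 * lam)^-1 * enorm y ^+ 2)%:E)%E.

End Defs.

(* Main.v *)
Require Import Defs.
From HB Require Import structures.
From mathcomp Require Import all_boot all_order all_algebra.
From mathcomp Require Import all_classical all_reals all_analysis.
From mathcomp Require Import ring lra.
Import Order.TTheory GRing.Theory Num.Theory.
Import numFieldNormedType.Exports.
Local Open Scope ring_scope.
Local Open Scope classical_set_scope.

Section Dot.
Set Implicit Arguments. Unset Strict Implicit.
Variable R : realType.

Lemma dotvC k (u v : 'cV[R]_k) : dotv u v = dotv v u.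
Proof. by apply: eq_bigr => i _; rewrite mulrC. Qed.

Lemma dotvDl k (u w v : 'cV[R]_k) : dotv (u + w) v = dotv u v + dotv w v.
Proof. by rewrite /dotv -big_split; apply: eq_bigr => i _; rewrite !mxE mulrDl. Qed.

Lemma dotvDr k (u w v : 'cV[R]_k) : dotv v (u + w) = dotv v u + dotv v w.
Proof. by rewrite dotvC dotvDl !(dotvC v). Qed.

Lemma dotvZl k a (u v : 'cV[R]_k) : dotv (a *: u) v = a * dotv u v.
Proof. by rewrite /dotv mulr_sumr; apply: eq_bigr => i _; rewrite !mxE mulrA. Qed.

Lemma dotvZr k a (u v : 'cV[R]_k) : dotv v (a *: u) = a * dotv v u.
Proof. by rewrite dotvC dotvZl dotvC. Qed.

Lemma dotvNl k (u v : 'cV[R]_k) : dotv (- u) v = - dotv u v.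
Proof. by rewrite -scaleN1r dotvZl mulN1r. Qed.

Lemma dotvNr k (u v : 'cV[R]_k) : dotv v (- u) = - dotv v u.
Proof. by rewrite dotvC dotvNl dotvC. Qed.

Lemma dotvBl k (u w v : 'cV[R]_k) : dotv (u - w) v = dotv u v - dotv w v.
Proof. by rewrite dotvDl dotvNl. Qed.

Lemma dotvBr k (u w v : 'cV[R]_k) : dotv v (u - w) = dotv v u - dotv v w.
Proof. by rewrite dotvDr dotvNr. Qed.

Lemma dotv0l k (v : 'cV[R]_k) : dotv 0 v = 0.
Proof. by rewrite /dotv big1 // => i _; rewrite mxE mul0r. Qed.

Lemma dotv0r k (v : 'cV[R]_k) : dotv v 0 = 0.
Proof. by rewrite dotvC dotv0l. Qed.

Lemma dotv_ge0 k (u : 'cV[R]_k) : 0 <= dotv u u.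
Proof. by apply: sumr_ge0 => i _; rewrite -expr2 sqr_ge0. Qed.

Lemma enorm_ge0 k (u : 'cV[R]_k) : 0 <= enorm u.
Proof. exact: sqrtr_ge0. Qed.

Lemma enorm_sq k (u : 'cV[R]_k) : enorm u ^+ 2 = dotv u u.
Proof. by rewrite /enorm sqr_sqrtr // dotv_ge0. Qed.

Lemma dotv_mx k (u v : 'cV[R]_k) : dotv u v = (u^T *m v) 0 0.
Proof. by rewrite /dotv mxE; apply: eq_bigr => i _; rewrite mxE. Qed.

Lemma dotv_tr m n (A : 'M[R]_(m, n)) w u : dotv (A^T *m w) u = dotv w (A *m u).
Proof. by rewrite !dotv_mx trmx_mul trmxK mulmxA. Qed.

Lemma dotv_delta k (u : 'cV[R]_k) i : dotv u (delta_mx i 0) = u i 0.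
Proof.
rewrite /dotv (bigD1 i) //= big1 ?addr0; first by rewrite mxE !eqxx mulr1.
by move=> j /negbTE ji; rewrite mxE ji mulr0.
Qed.

Lemma dotv_eq0 k (u : 'cV[R]_k) : dotv u u = 0 -> u = 0.
Proof.
move=> /eqP; rewrite psumr_eq0 => [/allP H|i _]; last by rewrite -expr2 sqr_ge0.
apply/matrixP => i j; rewrite ord1 mxE.
have := H i (mem_index_enum i); rewrite implyTb mulf_eq0 orbb => /eqP //.
Qed.

Lemma enorm_eq0 k (u : 'cV[R]_k) : enorm u = 0 -> u = 0.
Proof. by move=> h; apply: dotv_eq0; rewrite -enorm_sq h expr0n. Qed.

Lemma enormZ k a (u : 'cV[R]_k) : enorm (a *: u) = `|a| * enorm u.
Proof. by rewrite /enorm dotvZl dotvZr mulrA -expr2 sqrtrM ?sqr_ge0 // sqrtr_sqr. Qed.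

Lemma normsqD k (u v : 'cV[R]_k) :
  enorm (u + v) ^+ 2 = enorm u ^+ 2 + 2 * dotv u v + enorm v ^+ 2.
Proof. rewrite !enorm_sq !dotvDl !dotvDr (dotvC v u); ring. Qed.

End Dot.

Section Subgrad.
Set Implicit Arguments. Unset Strict Implicit.
Variable R : realType.
Variables (m : nat) (f : 'cV[R]_m -> R) (Hf : convex_fun f) (x : 'cV[R]_m).

Definition Sk k (d : 'cV[R]_m) := forall i : 'I_m, (k <= i)%N -> d i 0 = 0.

Lemma subgrad_step k : (k <= m)%N ->
  exists g, Sk k g /\ forall a, Sk k a -> f x + dotv a g <= f (x + a).
Proof.
elim: k => [_|k IH km].
  exists 0; split; first by move=> i _; rewrite mxE.
  move=> a Ha; have -> : a = 0.
    by apply/matrixP => i j; rewrite ord1 Ha // mxE.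
  by rewrite dotv0l addr0 addr0.
have [g [Sg Hg]] := IH (ltnW km).
pose i0 : 'I_m := Ordinal km.
pose e : 'cV[R]_m := delta_mx i0 0.
pose lo a r := (f x + dotv a g - f (x + a - r *: e)) / r.
pose hi b s := (f (x + b + s *: e) - f x - dotv b g) / s.
have key : forall a r b s, Sk k a -> 0 < r -> Sk k b -> 0 < s -> lo a r <= hi b s.
  move=> a r b s Sa r0 Sb s0.
  pose D := r + s.
  have D0 : 0 < D by rewrite /D addr_gt0.
  pose w := D^-1 *: (s *: a + r *: b).
  have Sw : Sk k w by move=> i ki; rewrite !mxE Sa // Sb // !mulr0 addr0 mulr0.
  have H1 := Hg w Sw.
  have t0 : 0 <= s / D by rewrite divr_ge0 // ltW.
  have t1 : s / D <= 1 by rewrite ler_pdivrMr // mul1r /D lerDr ltW.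
  have H2 := Hf (x + a - r *: e) (x + b + s *: e) t0 t1.
  have Ew : s / D *: (x + a - r *: e) + (1 - s / D) *: (x + b + s *: e) = x + w.
    apply/matrixP => i j; rewrite !mxE /D; field.
    by rewrite lt0r_neq0 // addr_gt0.
  rewrite Ew in H2.
  have Edw : dotv w g = D^-1 * (s * dotv a g + r * dotv b g).
    by rewrite /w dotvZl dotvDl !dotvZl.
  rewrite Edw in H1.
  have H3 := le_trans H1 H2.
  have H4 : D * (f x + D^-1 * (s * dotv a g + r * dotv b g)) <=
            D * (s / D * f (x + a - r *: e) + (1 - s / D) * f (x + b + s *: e)).
    by rewrite ler_pM2l.
  have E1 : D * (f x + D^-1 * (s * dotv a g + r * dotv b g)) =
     D * f x + (s * dotv a g + r * dotv b g).
    by field; rewrite lt0r_neq0.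
  have E2 : D * (s / D * f (x + a - r *: e) + (1 - s / D) * f (x + b + s *: e)) =
     s * f (x + a - r *: e) + r * f (x + b + s *: e).
    by rewrite /D; field; rewrite lt0r_neq0 // addr_gt0.
  rewrite E1 E2 /D in H4.
  rewrite /lo /hi ler_pdivrMr // mulrAC ler_pdivlMr //.
  nra.
have hasL : has_sup [set t | exists a r, Sk k a /\ 0 < r /\ t = lo a r].
  split.
    by exists (lo 0 1); exists 0, 1; split => //; move=> i _; rewrite mxE.
  exists (hi 0 1) => t [a [r [Sa [r0 ->]]]].
  by apply: key => //; move=> i _; rewrite mxE.
pose c := sup [set t | exists a r, Sk k a /\ 0 < r /\ t = lo a r].
have Hc1 : forall a r, Sk k a -> 0 < r -> lo a r <= c.
  move=> a r Sa r0; apply: sup_upper_bound => //.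
  by exists a, r.
have Hc2 : forall b s, Sk k b -> 0 < s -> c <= hi b s.
  move=> b s Sb s0; apply: ge_sup.
    by exists (lo 0 1); exists 0, 1; split => //; move=> i _; rewrite mxE.
  by move=> t [a [r [Sa [r0 ->]]]]; apply: key.
have ei : forall i : 'I_m, e i 0 = (i == i0)%:R.
  by move=> i; rewrite mxE andbT.
exists (g + c *: e); split.
  move=> i ki; rewrite !mxE Sg ?(ltnW ki) // andbT.
  have -> : (i == i0) = false.
    by apply/negbTE; apply/eqP => h; move: ki; rewrite h /= ltnn.
  by rewrite mulr0 addr0.
move=> d Sd.
pose s := d i0 0.
pose a := d - s *: e.
have Sa : Sk k a.
  move=> i ki; rewrite !mxE andbT.
  case: (eqVneq i i0) => [->|ne]; first by rewrite mulr1 subrr.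
  rewrite mulr0 subr0 Sd //.
  rewrite ltn_neqAle ki andbT; apply: contra ne => /eqP h.
  by apply/eqP/val_inj; rewrite /= h.
have Ed : d = a + s *: e by rewrite /a subrK.
have Edot : dotv d (g + c *: e) = dotv a g + s * c.
  rewrite Ed dotvDl !dotvDr !dotvZl !dotvZr dotv_delta (dotvC e g) dotv_delta.
  rewrite dotv_delta Sg // Sa // !ei eqxx.
  by rewrite !mulr0 add0r addr0 mulr1.
rewrite Edot.
case: (ltgtP s 0) => s0.
- have r0 : 0 < - s by rewrite oppr_gt0.
  have := Hc1 a (- s) Sa r0.
  rewrite /lo ler_pdivrMr // scaleNr opprK -[x + a + _]addrA -Ed.
  nra.
- have := Hc2 a s Sa s0.
  rewrite /hi ler_pdivlMr // -[x + a + _]addrA -Ed.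
  nra.
- have Eda : d = a by rewrite Ed s0 scale0r addr0.
  by rewrite s0 mul0r addr0 Eda; apply: Hg.
Qed.

Lemma subgrad_exists : exists g, forall z, f x + dotv (z - x) g <= f z.
Proof.
have [g [_ Hg]] := subgrad_step (leqnn m).
exists g => z.
have Sm : Sk m (z - x).
  by move=> i h; exfalso; move: (ltn_ord i); rewrite ltnNge h.
have := Hg (z - x) Sm.
by rewrite [x + _]addrC subrK.
Qed.

End Subgrad.

Section Main.
Set Implicit Arguments. Unset Strict Implicit.
Variable R : realType.
Variables (m n : nat) (A : 'M[R]_(m, n)) (omega : 'cV[R]_m -> R).
Variables (y : 'cV[R]_n) (lam : R) (Hlam : 0 < lam).

Lemma FY w v : ((dotv w v - omega w)%:E <= fconj omega v)%E.
Proof. by apply: ereal_sup_ubound; exists w. Qed.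

Lemma fconj_le v r : (forall w, dotv w v - omega w <= r) -> (fconj omega v <= r%:E)%E.
Proof. by move=> H; apply: ge_ereal_sup => _ [w _ <-]; rewrite lee_fin. Qed.

Lemma fconj_fin v : fconj omega v != +oo%E -> exists c, fconj omega v = c%:E.
Proof.
move=> H; have := FY 0 v.
by case: (fconj omega v) H => [c| |] //= _ _; exists c.
Qed.

Definition Qr v := (2*lam)^-1 * dotv (lam *: (A^T *m v) - y) (lam *: (A^T *m v) - y).
Definition Yr := (2*lam)^-1 * dotv y y.

Lemma PsiE v c : fconj omega v = c%:E -> Psi A omega y lam v = (Qr v + c - Yr)%:E.
Proof. by move=> E; rewrite /Psi E !enorm_sq. Qed.

Lemma PsiPinf v : fconj omega v = +oo%E -> Psi A omega y lam v = +oo%E.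
Proof. by move=> E; rewrite /Psi E. Qed.

Variable vbar : 'cV[R]_m.
Let zbar := y - lam *: (A^T *m vbar).
Let x := A *m zbar.

Lemma EQ v : Qr v - Qr vbar =
  (2*lam)^-1 * dotv ((y - lam *: (A^T *m v)) - zbar) ((y - lam *: (A^T *m v)) - zbar)
  - dotv (v - vbar) x.
Proof.
have E1 : (y - lam *: (A^T *m v)) - zbar = - (lam *: (A^T *m (v - vbar))).
  rewrite /zbar mulmxBr scalerBr; move: (A^T *m v) (A^T *m vbar) => p q.
  by apply/matrixP => i j; rewrite !mxE; ring.
have E2 : lam *: (A^T *m v) - y = - zbar - (y - lam *: (A^T *m v) - zbar).
  rewrite /zbar; move: (A^T *m v) (A^T *m vbar) => p q.
  by apply/matrixP => i j; rewrite !mxE; ring.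
have E3 : lam *: (A^T *m vbar) - y = - zbar by rewrite /zbar opprB.
rewrite /Qr E2 E3 E1.
rewrite !dotvBl !dotvBr !dotvNl !dotvNr !dotvZl !dotvZr (dotvC zbar (A^T *m _)) !dotv_tr -/x !dotvBl.

field; by rewrite lt0r_neq0.
Qed.

Lemma EP u : (2*lam)^-1 * enorm (u - y) ^+ 2 =
  (2*lam)^-1 * enorm (zbar - y) ^+ 2 - dotv (A *m (u - zbar)) vbar
  + (2*lam)^-1 * enorm (u - zbar) ^+ 2.
Proof.
have E1 : u - y = - (lam *: (A^T *m vbar)) + (u - zbar).
  rewrite /zbar; move: (A^T *m vbar) => p.
  by apply/matrixP => i j; rewrite !mxE; ring.
have E2 : zbar - y = - (lam *: (A^T *m vbar)).
  rewrite /zbar; move: (A^T *m vbar) => p.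
  by apply/matrixP => i j; rewrite !mxE; ring.
rewrite !enorm_sq E1 E2 !dotvDl !dotvDr !dotvNl !dotvNr !dotvZl !dotvZr.
rewrite (dotvC u (A^T *m vbar)) (dotvC zbar (A^T *m vbar)) !dotv_tr (dotvC (A *m _) vbar) [A *m (u - zbar)]mulmxBr [dotv vbar (A *m u - _)]dotvBr.
field; by rewrite lt0r_neq0.
Qed.

Lemma vbar_sub (Hconv : convex_fun omega)
  (Hmin : forall v, (Psi A omega y lam vbar <= Psi A omega y lam v)%E) :
  exists c, fconj omega vbar = c%:E /\ c = dotv x vbar - omega x.
Proof.
have [g Hg] := subgrad_exists Hconv x.
have Eg : fconj omega g = (dotv x g - omega x)%:E.
  apply/le_anti; rewrite FY andbT; apply: fconj_le => w.
  by have := Hg w; rewrite dotvBl; lra.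
have Hv : fconj omega vbar != +oo%E.
  apply/negP => /eqP E; have := Hmin g.
  by rewrite (PsiPinf E) (PsiE Eg) leye_eq.
have [c Ec] := fconj_fin Hv.
exists c; split => //.
apply/le_anti/andP; split; last by have := FY x vbar; rewrite Ec lee_fin.
pose d := g - vbar.
pose M1 := (2*lam)^-1 * (lam ^+ 2 * dotv (A^T *m d) (A^T *m d)).
have M1ge0 : 0 <= M1.
  by rewrite /M1 mulr_ge0 // ?invr_ge0 ?mulr_ge0 ?sqr_ge0 ?dotv_ge0 // ltW.
have key : forall t, 0 < t -> t <= 1 -> c <= dotv x vbar - omega x + t * M1.
  move=> t t0 t1.
  pose vt := vbar + t *: d.
  have Hct : (fconj omega vt <= ((1 - t) * c + t * (dotv x g - omega x))%:E)%E.
    apply: fconj_le => w.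
    have h1 : dotv w vbar - omega w <= c by have := FY w vbar; rewrite Ec lee_fin.
    have h2 : dotv w g - omega w <= dotv x g - omega x.
      by have := FY w g; rewrite Eg lee_fin.
    have -> : dotv w vt - omega w =
       (1 - t) * (dotv w vbar - omega w) + t * (dotv w g - omega w).
      by rewrite /vt /d dotvDr dotvZr dotvBr; ring.
    have t1' : 0 <= 1 - t by rewrite subr_ge0.
    nra.
  have Hvt : fconj omega vt != +oo%E.
    by apply/negP => /eqP E; move: Hct; rewrite E leye_eq.
  have [ct Ect] := fconj_fin Hvt.
  move: Hct; rewrite Ect lee_fin => Hct.
  have := Hmin vt; rewrite (PsiE Ec) (PsiE Ect) lee_fin => Hm.
  have HQ := EQ vt.
  have Ez : y - lam *: (A^T *m vt) - zbar = - ((lam * t) *: (A^T *m d)).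
    rewrite /zbar /vt mulmxDr -scalemxAr; move: (A^T *m vbar) (A^T *m d) => p q.
    by apply/matrixP => i j; rewrite !mxE; ring.
  rewrite Ez dotvNl dotvNr opprK !dotvZl !dotvZr in HQ.
  have Evt : vt - vbar = t *: d by rewrite /vt addrC addKr.
  rewrite Evt dotvZl /d dotvBl in HQ.
  have HQ' : Qr vt - Qr vbar = t ^+ 2 * M1 - t * (dotv g x - dotv vbar x).
    by rewrite HQ /M1; ring.
  rewrite (dotvC g x) (dotvC vbar x) in HQ'.
  have : t * c <= t * (dotv x vbar - omega x + t * M1) by nra.
  by rewrite ler_pM2l.
apply/ler_addgt0Pr => e e0.
pose t := e / (e + M1 + 1).
have D0 : 0 < e + M1 + 1 by lra.
have t0 : 0 < t by rewrite divr_gt0.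
have t1 : t <= 1 by rewrite ler_pdivrMr // mul1r; lra.
apply: (le_trans (key t t0 t1)); rewrite lerD2l.
by rewrite /t mulrAC ler_pdivrMr //; nra.
Qed.

End Main.

Section Opnorm.
Set Implicit Arguments. Unset Strict Implicit.
Variable R : realType.
Variables (m n : nat) (A : 'M[R]_(m, n)).

Lemma entry_le (x : 'cV[R]_n) i : `|x i 0| <= enorm x.
Proof.
rewrite -sqrtr_sqr /enorm ler_sqrt ?dotv_ge0 //.
rewrite /dotv (bigD1 i) //= expr2 lerDl sumr_ge0 // => j _.
by rewrite -expr2 sqr_ge0.
Qed.

Lemma enorm0 k : enorm (0 : 'cV[R]_k) = 0.
Proof. by rewrite /enorm dotv0l sqrtr0. Qed.

Let S := [set enorm (A *m x) | x in [set x : 'cV[R]_n | enorm x <= 1]].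

Lemma opnorm_has_sup : has_sup S.
Proof.
split; first by exists (enorm (A *m 0)); exists 0 => //; rewrite /= enorm0 ler01.
pose r i := \sum_j `|A i j|.
exists (Num.sqrt (\sum_i r i ^+ 2)) => _ [x /= x1 <-].
rewrite /enorm ler_sqrt; last by apply: sumr_ge0 => i _; rewrite sqr_ge0.
apply: ler_sum => i _.
have h : `|(A *m x) i 0| <= r i.
  rewrite mxE; apply: (le_trans (ler_norm_sum _ _ _)); apply: ler_sum => j _.
  rewrite normrM -[X in _ <= X]mulr1 ler_wpM2l //.
  exact: le_trans (entry_le x j) x1.
move: h; rewrite ler_norml => /andP [h1 h2].
rewrite -expr2; nra.
Qed.

Lemma opnorm_ge0 : 0 <= opnorm A.
Proof.
apply: (le_trans _ (sup_upper_bound opnorm_has_sup _)); last first.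
  by exists 0 => //; rewrite /= enorm0 ler01.
by rewrite mulmx0 enorm0.
Qed.

Lemma opnorm_bound w : enorm (A *m w) <= opnorm A * enorm w.
Proof.
have [e0|e0] := eqVneq (enorm w) 0.
  by rewrite (enorm_eq0 e0) mulmx0 !enorm0 mulr0.
have ep : 0 < enorm w by rewrite lt0r e0 enorm_ge0.
pose u := (enorm w)^-1 *: w.
have u1 : enorm u = 1 by rewrite /u enormZ ger0_norm ?invr_ge0 ?ltW // mulVf.
have Su : S (enorm (A *m u)) by exists u => //=; rewrite u1.
have := sup_upper_bound opnorm_has_sup Su.
rewrite /u -scalemxAr enormZ ger0_norm; last by rewrite invr_ge0 ltW.
rewrite -/(opnorm A) mulrC ler_pdivrMr // => h.
Qed.

Lemma opnorm_zero : (forall u : 'cV[R]_m, enorm u = 0) -> opnorm A = 0.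
Proof.
move=> H; apply/le_anti; rewrite opnorm_ge0 andbT.
apply: ge_sup; first by exists (enorm (A *m 0)); exists 0 => //; rewrite /= enorm0 ler01.
by move=> _ [x _ <-]; rewrite H.
Qed.

End Opnorm.

Lemma enormN (R : realType) k (u : 'cV[R]_k) : enorm (- u) = enorm u.
Proof. by rewrite /enorm dotvNl dotvNr opprK. Qed.

Theorem theorem2p21 (R : realType) (m n : nat) (A : 'M[R]_(m, n))
  (omega : 'cV[R]_m -> R) (K : R)
  (Hconv : convex_fun omega) (Hlip : lipschitz_with K omega)
  (y : 'cV[R]_n) (lam : R) (Hlam : 0 < lam)
  (vbar : 'cV[R]_m)
  (Hmin : forall v : 'cV[R]_m, (Psi A omega y lam vbar <= Psi A omega y lam v)%E)
  (vs : nat -> 'cV[R]_m)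
  (Hcv : (fun j => Psi A omega y lam (vs j)) @ \oo --> Psi A omega y lam vbar) :
  let z := fun j => y - lam *: (A^T *m vs j) in
  let zbar := y - lam *: (A^T *m vbar) in
  (* (i) *)
  (forall u : 'cV[R]_n, Phi A omega y lam zbar <= Phi A omega y lam u) /\
  (* (ii) *)
  (forall j, (((2 * lam)^-1 * enorm (z j - zbar) ^+ 2)%:E
               <= Psi A omega y lam (vs j) - Psi A omega y lam vbar)%E) /\
  ((fun j => enorm (z j - zbar)) @ \oo --> 0) /\
  (* (iii) : when Psi(v_j) = +oo the right-hand side is +oo and the bound is trivial *)
  (forall j, Psi A omega y lam (vs j) \is a fin_num ->
     let d := fine (Psi A omega y lam (vs j) - Psi A omega y lam vbar)%E in
     Phi A omega y lam (z j) - Phi A omega y lam zbar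
       <= Num.sqrt d * (2 * Num.sqrt (2 * lam) * K * opnorm A + Num.sqrt d)).
Proof.
move=> z zbar.
have [c [Ec Ecx]] := vbar_sub Hlam Hconv Hmin.
rewrite -/zbar in Ecx.
set x := A *m zbar in Ecx.
have sub_vbar : forall w, omega x + dotv (w - x) vbar <= omega w.
  move=> w; have := FY omega w vbar; rewrite Ec lee_fin dotvBl Ecx (dotvC x).
  lra.
pose P := Qr A y lam vbar + c - Yr y lam.
have PsiV : Psi A omega y lam vbar = P%:E by rewrite (PsiE _ _ _ Ec).
have iireal : forall v cv, fconj omega v = cv%:E ->
    (2*lam)^-1 * enorm (y - lam *: (A^T *m v) - zbar) ^+ 2
      <= (Qr A y lam v + cv - Yr y lam) - P.
  move=> v cv Ev.
  have h1 := EQ A y Hlam vbar v.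
  have h2 := FY omega x v; rewrite Ev lee_fin in h2.
  rewrite -/zbar -/x [dotv (v - vbar) x]dotvBl (dotvC v) (dotvC vbar) in h1.
  rewrite enorm_sq /P; lra.
have fin_case : forall j, Psi A omega y lam (vs j) \is a fin_num ->
    exists cj, fconj omega (vs j) = cj%:E.
  move=> j; case E: (fconj omega (vs j)) => [cj| |]; first by exists cj.
    by rewrite (PsiPinf _ _ _ E).
  by have := FY omega 0 (vs j); rewrite E.
split.
  move=> u; rewrite /Phi (EP A y Hlam vbar u) -/zbar.
  have := sub_vbar (A *m u); rewrite -mulmxBr -/x.
  have : 0 <= (2 * lam)^-1 * enorm (u - zbar) ^+ 2.
    by rewrite mulr_ge0 ?sqr_ge0 // invr_ge0 mulr_ge0 // ltW.
  rewrite -/x; lra.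
have iiE : forall j, (((2 * lam)^-1 * enorm (z j - zbar) ^+ 2)%:E
               <= Psi A omega y lam (vs j) - Psi A omega y lam vbar)%E.
  move=> j; case E: (fconj omega (vs j)) => [cj| |].
  - by rewrite (PsiE _ _ _ E) PsiV -EFinB lee_fin; apply: iireal.
  - by rewrite (PsiPinf _ _ _ E) PsiV /= leey.
  - by have := FY omega 0 (vs j); rewrite E.
split => //.
split.
  have Hcv' := Hcv; rewrite PsiV in Hcv'.
  move/fine_cvgP: Hcv' => [Hfin Hf].
  apply: (@squeeze_cvgr _ _ _ _ (fun _ => 0)
     (fun j => Num.sqrt (2 * lam * (fine (Psi A omega y lam (vs j)) - P)))).
  - near=> j.
    have hf : Psi A omega y lam (vs j) \is a fin_num by near: j.
    have [cj Ej] := fin_case j hf.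
    rewrite enorm_ge0 /= (PsiE _ _ _ Ej) /=.
    rewrite -[enorm _](@ger0_norm _ (enorm (z j - zbar))) ?enorm_ge0 //.
    rewrite -sqrtr_sqr ler_sqrt; last first.
      have := iireal _ _ Ej; have : 0 <= (2 * lam)^-1 * enorm (z j - zbar) ^+ 2.
        by rewrite mulr_ge0 ?sqr_ge0 // invr_ge0 mulr_ge0 // ltW.
      move=> h0 h1; apply: mulr_ge0; first by rewrite mulr_ge0 // ltW.
      exact: le_trans h0 h1.
    have := iireal _ _ Ej.
    have l2 : 0 < 2 * lam by rewrite mulr_gt0.
    rewrite -(ler_pM2l l2) mulrA mulfV ?mul1r //.
    by rewrite lt0r_neq0.
  - first [exact: (@cvg_cst R (0:R)) | exact: (@cvg_cst R^o (0:R)) | exact: cvg_cst _ | idtac "NONE"; apply: cvgr_cst ].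
  - have Hin : (fun j : nat => (2 * lam * (fine (Psi A omega y lam (vs j)) - P) : R)) @ \oo --> (2 * lam * (P - P) : R).
      apply: cvgM; first by first [exact: (@cvg_cst R (0:R)) | exact: (@cvg_cst R^o) | exact: cvg_cst _].
      apply: cvgB => //; first [exact: (@cvg_cst R (0:R)) | exact: (@cvg_cst R^o) | exact: cvg_cst _].
    have := continuous_cvg _ (@sqrt_continuous R _) Hin.
    move=> H; have {}H := H eventually_filter; rewrite subrr mulr0 sqrtr0 in H; exact: H.
move=> j hf; cbv zeta.
have [cj Ej] := fin_case j hf.
pose D := Qr A y lam (vs j) + cj - Yr y lam - P.
have Ed : fine (Psi A omega y lam (vs j) - Psi A omega y lam vbar)%E = D.
  by rewrite (PsiE _ _ _ Ej) PsiV.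
rewrite Ed.
have hw : (2*lam)^-1 * enorm (z j - zbar) ^+ 2 <= D := iireal _ _ Ej.
have l2 : 0 < 2 * lam by rewrite mulr_gt0.
have D0 : 0 <= D.
  apply: le_trans hw; by rewrite mulr_ge0 ?sqr_ge0 // invr_ge0 ltW.
have hw2 : enorm (z j - zbar) ^+ 2 <= 2 * lam * D.
  by move: hw; rewrite -(ler_pM2l l2) mulrA mulfV ?mul1r // lt0r_neq0.
set w := z j - zbar in hw hw2 *.
rewrite /Phi (EP A y Hlam vbar (z j)) -/zbar -/w -/x.
have L1 : omega (A *m z j) - omega x <= K * enorm (A *m w).
  have h := Hlip (A *m z j) x; rewrite /w [A *m (z j - zbar)]mulmxBr -/x.
  exact: le_trans (ler_norm _) h.
have L2 : - dotv (A *m w) vbar <= K * enorm (A *m w).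
  have h1 := sub_vbar (x - A *m w). have h2 := Hlip (x - A *m w) x.
  have e : x - A *m w - x = - (A *m w).
    move: (A *m w) => q; rewrite /x; move: (A *m zbar) => p; by apply/matrixP => i k; rewrite !mxE; ring.
  rewrite e dotvNl in h1; rewrite e enormN in h2.
  have := ler_norm (omega (x - A *m w) - omega x). lra.
have KB : K * enorm (A *m w) <= Num.sqrt D * (Num.sqrt (2 * lam) * K * opnorm A).
  have [K0|K0] := lerP 0 K.
  - have e1 := opnorm_bound A w.
    have e2 : enorm w <= Num.sqrt (2 * lam) * Num.sqrt D.
      rewrite -sqrtrM; last exact: ltW.
      rewrite -[enorm w](@ger0_norm _) ?enorm_ge0 // -sqrtr_sqr ler_sqrt //.
      by rewrite mulr_ge0 // ltW.
    have op0 := opnorm_ge0 A.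
    have e3 := ler_wpM2l K0 e1.
    have e4 := ler_wpM2l (mulr_ge0 K0 op0) e2.
    apply: (le_trans e3); apply: (le_trans _ (le_trans e4 _)).
      by rewrite mulrA.
    by rewrite le_eqVlt; apply/orP; left; apply/eqP; ring.
  - have Z : forall u : 'cV[R]_m, enorm u = 0.
      move=> u; have := Hlip u 0; rewrite subr0 => h.
      have := normr_ge0 (omega u - omega 0); have := enorm_ge0 u => h1 h2.
      apply/le_anti; rewrite enorm_ge0 andbT; nra.
    by rewrite Z (opnorm_zero A Z) !mulr0.
have sq : Num.sqrt D * Num.sqrt D = D by rewrite -expr2 sqr_sqrtr.
rewrite mulrDr sq.
have -> : Num.sqrt D * (2 * Num.sqrt (2 * lam) * K * opnorm A) =
   2 * (Num.sqrt D * (Num.sqrt (2 * lam) * K * opnorm A)) by ring.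
lra.
Unshelve. all: by end_near. Qed.
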